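(* If $s,t\in\Sigma^n$ and $d:\Sigma^n\to\Sigma$ is a depth assignment, then \[D\left(P\left(H(s)+e_{d_s}\right)-P\left(H(t)+e_{d_t}\right)\right)\le n+1.\]
   Context: Let $k\ge 1$ be an integer, $\Sigma=\{0,1,\dots,k-1\}$, $n\ge 1$. A depth assignment is any function $d:\Sigma^n\to\Sigma$, written $s\mapsto d_s$. The histogram $H(s):\Sigma\to\mathbb{Z}$ of a string $s$ gives the number of occurrences of each symbol in $s$; $e_b$ is the indicator function of $b\in\Sigma$. For $H:\Sigma\to\mathbb{Z}$, the partial sum is $P(H)(i)=\sum_{j=0}^{i}H(j)$ and the difference is $D(H)=\max_{i,j\in\Sigma}(H(i)-H(j))$. *)

(* Defs.v *)
From mathcomp Require Import all_boot all_order all_algebra.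
Set Implicit Arguments. Unset Strict Implicit. Unset Printing Implicit Defensive.
Import Order.TTheory GRing.Theory Num.Theory.
Local Open Scope ring_scope.

(* Alphabet Sigma = {0,...,k-1} is 'I_k; strings in Sigma^n are n.-tuple 'I_k. *)

Definition hist (k n : nat) (s : n.-tuple 'I_k) : 'I_k -> int :=
  fun b => (count_mem b s)%:Z.

Definition indic (k : nat) (b : 'I_k) : 'I_k -> int :=
  fun i => (i == b)%:Z.

Definition fadd (k : nat) (F G : 'I_k -> int) : 'I_k -> int := fun i => F i + G i.
Definition fsub (k : nat) (F G : 'I_k -> int) : 'I_k -> int := fun i => F i - G i.

Definition psum (k : nat) (F : 'I_k -> int) : 'I_k -> int :=
  fun i => \sum_(j < k | (j <= i)%N) F j.

(* Difference D(H) = max_{i,j in Sigma} (H(i) - H(j)).  The fold starts at 0,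
   which is harmless: for nonempty Sigma the max is >= H(i)-H(i) = 0. *)
Definition Dmax (k : nat) (F : 'I_k -> int) : int :=
  \big[Order.max/0]_(i < k) \big[Order.max/0]_(j < k) (F i - F j).

(* Main.v *)
Require Import Defs.
From mathcomp Require Import all_boot all_order all_algebra.
From mathcomp Require Import zify.
Import Order.TTheory GRing.Theory Num.Theory.
Local Open Scope ring_scope.

Lemma psum_diff (k : nat) (G : 'I_k -> int) (i j : 'I_k) :
  (forall l, 0 <= G l) -> (i <= j)%N ->
  0 <= psum G j - psum G i <= \sum_l G l.
Proof.
move=> G0 ij; rewrite /psum.
rewrite (bigID (fun l : 'I_k => (l <= i)%N) (fun l : 'I_k => (l <= j)%N)) /=.
have -> : \sum_(l < k | (l <= j)%N && (l <= i)%N) G l =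
          \sum_(l < k | (l <= i)%N) G l.
  by apply: eq_bigl => l; case: (leqP l i) => li; rewrite ?andbF ?andbT //; apply: leq_trans ij.
rewrite addrC addrK; apply/andP; split.
  by apply: sumr_ge0 => l _.
rewrite big_mkcond /=; apply: ler_sum => l _; case: ifP => // _.
Qed.

Lemma sum_count (k : nat) (s : seq 'I_k) :
  (\sum_(l < k) count_mem l s)%N = size s.
Proof.
elim: s => [|x s IH] /=; first by rewrite big1.
rewrite big_split /= IH.
rewrite (bigD1 x) //= eqxx big1 // => l /negbTE; rewrite eq_sym => ->. done.
Qed.

Lemma tot_eq (k n : nat) (s : n.-tuple 'I_k) (b : 'I_k) :
  \sum_l fadd (hist s) (indic b) l = (n + 1)%:Z.
Proof.
rewrite /fadd /hist /indic big_split /=.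
rewrite -(big_morph (fun m : nat => m%:Z) (fun _ _ => PoszD _ _) (erefl 0%:Z)).
rewrite sum_count size_tuple.
rewrite (bigD1 b) //= eqxx big1 ?addr0 //.
by move=> l /negbTE ->.
Qed.

Theorem lemma7 (k n : nat) (hk : (1 <= k)%N) (hn : (1 <= n)%N)
    (d : n.-tuple 'I_k -> 'I_k) (s t : n.-tuple 'I_k) :
  Dmax (fsub (psum (fadd (hist s) (indic (d s))))
             (psum (fadd (hist t) (indic (d t)))))
  <= (n + 1)%:Z.
Proof.
set A := psum _; set B := psum _.
have G0 : forall (u : n.-tuple 'I_k) b l, 0 <= fadd (hist u) (indic b) l.
  by move=> u b l; rewrite /fadd /hist /indic.
have HA := fun i j => @psum_diff k _ i j (G0 s (d s)).
have HB := fun i j => @psum_diff k _ i j (G0 t (d t)).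
rewrite !tot_eq in HA HB.
rewrite /Dmax; apply: bigmax_le => // i _; apply: bigmax_le => // j _.
rewrite /fsub.
case: (leqP i j) => ij.
  move: (HA i j ij) (HB i j ij) => /andP[a1 a2] /andP[b1 b2].
  rewrite -/A -/B in a1 a2 b1 b2 *; lia.
have ji := ltnW ij.
move: (HA j i ji) (HB j i ji) => /andP[a1 a2] /andP[b1 b2].
rewrite -/A -/B in a1 a2 b1 b2 *; lia.
Qed.
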